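(* If $T$ is a strongly connected tournament with more than one vertex, then $\overrightarrow{hn}_{P_3^*}(T)=\overrightarrow{hn}_{g}(T)=2$.
   Context: A tournament is an orientation of a complete graph. It is strong (strongly connected) if for every ordered pair of distinct vertices $u,v$ there is a directed $(u,v)$-path. For an oriented graph $D$ consider two interval functions: the geodetic one $I_g(u,v)$ = set of vertices on some shortest directed $(u,v)$-path or some shortest directed $(v,u)$-path; and the distance-two one $I_{P_3^*}(u,v)$ = $\{u,v\}$ together with all vertices $w$ such that $(u,w),(w,v)\in A(D)$ and $(u,v)\notin A(D)$, or $(v,w),(w,u)\in A(D)$ and $(v,u)\notin A(D)$ (i.e. vertices on a shortest directed path of length exactly two between them in either direction). For an interval function $I$ and $S\subseteq V(D)$, $I(S)=\bigcup_{u,v\in S}I(u,v)$; $C$ is convex if $I(C)=C$; the convex hull of $S$ is the smallest convex set containing $S$; a hull set is a set with convex hull $V(D)$; the hull number ($\overrightarrow{hn}_g$, resp. $\overrightarrow{hn}_{P_3^*}$) is the minimum size of a hull set for the respective interval function. *)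

(* Defs.v *)
From mathcomp Require Import all_boot.
Set Implicit Arguments. Unset Strict Implicit. Unset Printing Implicit Defensive.

Section Digraph.
Variables (T : finType) (a : rel T).

Definition oriented : Prop := forall u v, a u v -> ~~ a v u.
Definition tournament : Prop :=
  (forall u, ~~ a u u) /\ oriented /\ (forall u v, u != v -> a u v || a v u).
Definition strong : Prop := forall u v, connect a u v.

(* a directed (u,v)-walk: the vertex sequence u :: p *)
Definition dwalk (u : T) (p : seq T) (v : T) : bool := path a u p && (last u p == v).
(* a shortest directed (u,v)-path (length = size p) *)
Definition shortest_dpath (u : T) (p : seq T) (v : T) : Prop :=
  dwalk u p v /\ forall q, dwalk u q v -> size p <= size q.

(* interval functions, as predicates I u v w  <->  w \in I(u,v) *)
Definition I_g (u v w : T) : Prop :=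
  (exists p, shortest_dpath u p v /\ w \in u :: p) \/
  (exists p, shortest_dpath v p u /\ w \in v :: p).

Definition I_P3 (u v w : T) : Prop :=
  w = u \/ w = v \/
  (a u w /\ a w v /\ ~~ a u v) \/ (a v w /\ a w u /\ ~~ a v u).

Definition interval := T -> T -> T -> Prop.

(* C is convex: I(C) = C, i.e. I(C) \subset C (C \subset I(C) holds as u \in I(u,u)) *)
Definition convex (I : interval) (C : {set T}) : Prop :=
  forall u v w, u \in C -> v \in C -> I u v w -> w \in C.

Definition in_convex_hull (I : interval) (S : {set T}) (x : T) : Prop :=
  forall C : {set T}, convex I C -> S \subset C -> x \in C.

Definition hull_set (I : interval) (S : {set T}) : Prop :=
  forall x, in_convex_hull I S x.

Definition hull_number_is (I : interval) (n : nat) : Prop :=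
  (exists S : {set T}, hull_set I S /\ #|S| = n) /\
  (forall S : {set T}, hull_set I S -> n <= #|S|).

End Digraph.

(* Main.v *)
Require Import Defs.
From mathcomp Require Import all_boot zify.
Set Implicit Arguments. Unset Strict Implicit. Unset Printing Implicit Defensive.

Definition ip3 (T : finType) (a : rel T) (u v w : T) : bool :=
  [|| w == u, w == v, a u w && a w v && ~~ a u v | a v w && a w u && ~~ a v u].

Definition cvxb (T : finType) (a : rel T) (C : {set T}) : bool :=
  [forall u in C, forall v in C, forall w, ip3 a u v w ==> (w \in C)].

Definition H (T : finType) (a : rel T) (S : {set T}) : {set T} :=
  [set x | [forall C : {set T}, (cvxb a C && (S \subset C)) ==> (x \in C)]].

Lemma ip3P (T : finType) (a : rel T) u v w : reflect (I_P3 a u v w) (ip3 a u v w).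
Proof.
rewrite /ip3 /I_P3; apply: (iffP idP).
  case/or4P=> [/eqP->|/eqP->|/andP[/andP[-> ->] ->]|/andP[/andP[-> ->] ->]].
  - by left.
  - by right; left.
  - by right; right; left.
  - by right; right; right.
case=> [->|[->|[[-> [-> ->]]|[-> [-> ->]]]]]; rewrite ?eqxx ?orbT //.
Qed.

Lemma cvxbP (T : finType) (a : rel T) C : reflect (convex (I_P3 a) C) (cvxb a C).
Proof.
apply: (iffP forall_inP).
  move=> h u v w uC vC /ip3P I; move: (h u uC) => /forall_inP/(_ v vC)/forallP/(_ w).
  by rewrite I.
move=> h u uC; apply/forall_inP=> v vC; apply/forallP=> w; apply/implyP=> /ip3P.
exact: h.
Qed.

Lemma H_sub (T : finType) (a : rel T) (S : {set T}) : S \subset H a S.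
Proof.
apply/subsetP=> x xS; rewrite inE; apply/forallP=> C; apply/implyP=> /andP[_ /subsetP].
exact.
Qed.

Lemma H_min (T : finType) (a : rel T) (S : {set T}) C : cvxb a C -> S \subset C -> H a S \subset C.
Proof.
move=> cC sC; apply/subsetP=> x; rewrite inE => /forallP/(_ C); by rewrite cC sC.
Qed.

Lemma H_cvx (T : finType) (a : rel T) (S : {set T}) : cvxb a (H a S).
Proof.
apply/forall_inP=> u uH; apply/forall_inP=> v vH; apply/forallP=> w; apply/implyP=> I.
rewrite inE; apply/forallP=> C; apply/implyP=> /andP[cC sC].
have /subsetP hs := H_min cC sC.
move/cvxbP: cC => cC; apply: (cC u v); [exact: hs | exact: hs | exact/ip3P].
Qed.

Lemma H_ip3 (T : finType) (a : rel T) (S : {set T}) u v w :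
  u \in H a S -> v \in H a S -> ip3 a u v w -> w \in H a S.
Proof. by move=> uH vH I; move/cvxbP: (H_cvx a S) => c; apply: (c u v) => //; apply/ip3P. Qed.

Lemma out_cl (T : finType) (a : rel T) (C : {set T}) w x y :
  tournament a -> cvxb a C -> w \notin C -> x \in C -> y \in C ->
  a x y -> a w x -> a w y.
Proof.
move=> [irr [ori tot]] cC wC xC yC axy awx.
have : y != w by apply: contraNneq wC => <-.
move/tot/orP=> [ayw|//].
move/cvxbP: cC => cC.
have : w \in C by apply: (cC x y) => //; apply/ip3P; rewrite /ip3 ayw awx (ori _ _ axy) !orbT.
by rewrite (negbTE wC).
Qed.

Lemma in_cl (T : finType) (a : rel T) (C : {set T}) w x y :
  tournament a -> cvxb a C -> w \notin C -> x \in C -> y \in C ->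
  a x y -> a y w -> a x w.
Proof.
move=> [irr [ori tot]] cC wC xC yC axy ayw.
have : x != w by apply: contraNneq wC => <-.
move/tot/orP=> [//|awx].
move/cvxbP: cC => cC.
have : w \in C by apply: (cC x y) => //; apply/ip3P; rewrite /ip3 ayw awx (ori _ _ axy) !orbT.
by rewrite (negbTE wC).
Qed.

Lemma D_cvx (T : finType) (a : rel T) (C : {set T}) w :
  tournament a -> cvxb a C -> w \notin C -> cvxb a [set x in C | a w x].
Proof.
move=> tn cC wC; apply/cvxbP => x y z; rewrite !inE => /andP[xC awx] /andP[yC awy] /ip3P I.
have zC : z \in C by move/cvxbP: cC => c; apply: (c x y) => //; apply/ip3P.
rewrite zC /=; move: I; rewrite /ip3 => /or4P[/eqP->|/eqP->|/andP[/andP[h _] _]|/andP[/andP[h _] _]] //.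
  exact: (out_cl tn cC wC xC zC h awx).
exact: (out_cl tn cC wC yC zC h awy).
Qed.

Lemma E_cvx (T : finType) (a : rel T) (C : {set T}) w :
  tournament a -> cvxb a C -> w \notin C -> cvxb a [set x in C | a x w].
Proof.
move=> tn cC wC; apply/cvxbP => x y z; rewrite !inE => /andP[xC awx] /andP[yC awy] /ip3P I.
have zC : z \in C by move/cvxbP: cC => c; apply: (c x y) => //; apply/ip3P.
rewrite zC /=; move: I; rewrite /ip3 => /or4P[/eqP->|/eqP->|/andP[/andP[_ h] _]|/andP[/andP[_ h] _]] //.
  exact: (in_cl tn cC wC zC yC h awy).
exact: (in_cl tn cC wC zC xC h awx).
Qed.

Lemma dicho (T : finType) (a : rel T) u v c w :
  tournament a -> a u v -> a v c -> a c u -> w \notin H a [set u; v] ->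
  (forall x, x \in H a [set u; v] -> a w x) \/ (forall x, x \in H a [set u; v] -> a x w).
Proof.
move=> tn auv avc acu wC.
have cC := H_cvx a [set u; v].
have uC : u \in H a [set u; v] by apply: (subsetP (H_sub a _)); rewrite !inE eqxx.
have vC : v \in H a [set u; v] by apply: (subsetP (H_sub a _)); rewrite !inE eqxx orbT.
have cinC : c \in H a [set u; v].
  apply: H_ip3 uC vC _; rewrite /ip3 avc acu.
  by case: tn => _ [ori _]; rewrite (ori _ _ auv) !orbT.
have uw : u != w by apply: contraNneq wC => <-.
case: tn (tn) => _ [_ tot] tn.
case/orP: (tot _ _ uw) => [auw|awu].
  right.
  have cw : a c w := in_cl tn cC wC cinC uC acu auw.
  have vw : a v w := in_cl tn cC wC vC cinC avc cw.
  have sub : [set u; v] \subset [set x in H a [set u; v] | a x w].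
    by apply/subsetP=> x; rewrite in_set2 => /orP[]/eqP->; rewrite inE ?uC ?vC ?auw ?vw.
  have := H_min (E_cvx tn cC wC) sub.
  by move/subsetP=> h x /h; rewrite inE => /andP[].
left.
have vw : a w v := out_cl tn cC wC uC vC auv awu.
have sub : [set u; v] \subset [set x in H a [set u; v] | a w x].
  by apply/subsetP=> x; rewrite in_set2 => /orP[]/eqP->; rewrite inE ?uC ?vC ?awu ?vw.
have := H_min (D_cvx tn cC wC) sub.
by move/subsetP=> h x /h; rewrite inE => /andP[].
Qed.

Lemma cross (T : finType) (a : rel T) (X : {set T}) x y :
  connect a x y -> x \notin X -> y \in X -> exists x' y', [/\ x' \notin X, y' \in X & a x' y'].
Proof.
case/connectP=> p; elim: p x => [|t p IH] x /=.
  by move=> _ -> /negbTE->.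
move=> /andP[axt pt] ey; case: (boolP (t \in X)) => tX xX yX.
  by exists x, t.
exact: IH pt ey tX yX.
Qed.

Lemma step (T : finType) (a : rel T) u v c w :
  tournament a -> strong a -> a u v -> a v c -> a c u -> w \notin H a [set u; v] ->
  exists b a' c', [/\ a b a', a a' c', a c' b & #|H a [set u; v]| < #|H a [set b; a']|].
Proof.
move=> tn st auv avc acu wC.
set C := H a [set u; v].
have uC : u \in C by apply: (subsetP (H_sub a _)); rewrite !inE eqxx.
have ori : oriented a by case: tn => _ [].
suff [b [a' [bC aC ab hb ha]]] : exists b a', [/\ b \notin C, a' \notin C, a b a',
    (forall z, z \in C -> a z b) & (forall z, z \in C -> a a' z)].
  exists b, a', u; split => //; [exact: ha | exact: hb |].
  apply: proper_card; rewrite properE; apply/andP; split.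
    apply/subsetP=> z zC; apply: (@H_ip3 _ a _ b a').
    - by apply: (subsetP (H_sub a _)); rewrite !inE eqxx.
    - by apply: (subsetP (H_sub a _)); rewrite !inE eqxx orbT.
    by rewrite /ip3 (ha _ zC) (hb _ zC) (ori _ _ ab) !orbT.
  apply/subsetPn; exists b => //.
  by apply: (subsetP (H_sub a _)); rewrite !inE eqxx.
set A := [set z | (z \notin C) && [forall x in C, a z x]].
set B := [set z | (z \notin C) && [forall x in C, a x z]].
have AB : forall z, z \notin C -> (z \in A) || (z \in B).
  move=> z zC; case: (dicho tn auv avc acu zC) => h; apply/orP; [left|right];
  by rewrite inE zC; apply/forall_inP.
case/orP: (AB w wC) => [wA|wB].
  have uA : u \notin A by apply/negP; rewrite inE => /andP[/negP h _]; exact: h uC.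
  have [x' [y' [xA yA axy]]] := cross (st u w) uA wA.
  move: (yA); rewrite inE => /andP[yC /forall_inP hy].
  have xC : x' \notin C by apply: contraL axy => /hy /ori.
  move: (AB _ xC); rewrite (negbTE xA) /= inE => /andP[_ /forall_inP hx].
  by exists x', y'.
have uB : u \in ~: B by rewrite inE; apply/negP; rewrite inE => /andP[/negP h _]; exact: h uC.
have wB' : w \notin ~: B by rewrite inE wB.
have [x' [y' [xB yB axy]]] := cross (st w u) wB' uB.
move: xB; rewrite inE negbK => xB.
move: (xB); rewrite inE => /andP[xC /forall_inP hx].
have yC : y' \notin C by apply: contraL axy => /hx /ori.
move: yB; rewrite inE => yB.
move: (AB _ yC); rewrite (negbTE yB) orbF inE => /andP[_ /forall_inP hy].
by exists x', y'.
Qed.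

Lemma iter_full (T : finType) (a : rel T) n : tournament a -> strong a ->
  forall u v c, a u v -> a v c -> a c u -> #|T| - #|H a [set u; v]| <= n ->
  exists u' v', a u' v' /\ H a [set u'; v'] = setT.
Proof.
move=> tn st; elim: n => [|n IH] u v c auv avc acu hn.
  exists u, v; split=> //; apply/eqP; rewrite eqEcard subsetT cardsT.
  have : #|H a [set u; v]| <= #|T| by apply: max_card.
  by move: hn; lia.
case: (boolP ([set: T] \subset H a [set u; v])) => [s|].
  by exists u, v; split=> //; apply/eqP; rewrite eqEsubset s subsetT.
case/subsetPn=> w _ wC.
have [b [a' [c' [ab ac cb lt]]]] := step tn st auv avc acu wC.
apply: (IH b a' c') => //.
have : #|H a [set b; a']| <= #|T| by apply: max_card.
move: lt hn; lia.
Qed.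

Lemma tri (T : finType) (a : rel T) x : tournament a ->
  forall p s, path a s p -> a x s -> last s p = x -> exists y z, [/\ a x y, a y z & a z x].
Proof.
move=> [irr [ori tot]]; elim=> [|t p IH] s /=.
  by move=> _ axs sx; move: axs; rewrite sx (negbTE (irr x)).
move=> /andP[ast pt] axs lt.
have tx : t != x by apply: contraTneq ast => ->; apply: ori.
case/orP: (tot _ _ tx) => [atx|axt].
  by exists s, t.
exact: IH pt axt lt.
Qed.

Lemma other (T : finType) : 1 < #|T| -> forall x : T, exists y, y != x.
Proof.
move=> h x; have : 0 < #|predC1 x| by rewrite cardC1; lia.
by case/card_gt0P => y; rewrite inE => yx; exists y.
Qed.

Lemma lower (T : finType) (I : interval T) : (forall x w, I x x w -> w = x) -> 1 < #|T| ->
  forall S : {set T}, hull_set I S -> 2 <= #|S|.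
Proof.
move=> hI hT S hS; case: (ltnP 1 #|S|) => // hs; exfalso.
have [x _] : exists x : T, true by case/card_gt0P: (ltnW hT) => x _; exists x.
move: hs; rewrite leq_eqVlt ltnS leqn0 => /orP[h1|/eqP/cards0_eq S0].
  case/cards1P: h1 => z Sz; have [y yz] := other hT z.
  have : y \in [set z].
    apply: (hS y [set z]); last by rewrite Sz.
    move=> u v w; rewrite !inE => /eqP-> /eqP-> /hI ->; exact: eqxx.
  by rewrite inE (negbTE yz).
have : x \in (set0 : {set T}).
  apply: (hS x set0); last by rewrite S0.
  by move=> u v w; rewrite inE.
by rewrite inE.
Qed.

Lemma P3_self (T : finType) (a : rel T) : tournament a -> forall x w, I_P3 a x x w -> w = x.
Proof.
move=> [irr [ori _]] x w [->|[->|[[h1 [h2 _]]|[h1 [h2 _]]]]] //;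
by move: (ori _ _ h1); rewrite h2.
Qed.

Lemma g_self (T : finType) (a : rel T) : forall x w, I_g a x x w -> w = x.
Proof.
move=> x w [] [p [[_ hp] wp]]; (have : dwalk a x [::] x by rewrite /dwalk /= eqxx);
by move/hp; case: p wp {hp} => // ; rewrite inE => /eqP.
Qed.

Lemma g_P3 (T : finType) (a : rel T) C : tournament a -> convex (I_g a) C -> convex (I_P3 a) C.
Proof.
move=> [irr [ori _]] hC u v w uC vC [->|[->|[[auw [awv nuv]]|[avw [awu nvu]]]]] //.
  apply: (hC u v) => //; left; exists [:: w; v]; split; last by rewrite !inE eqxx orbT.
  split; first by rewrite /dwalk /= auw awv eqxx.
  case=> [|t [|t' q]] //=.
  - by rewrite /dwalk /= => /eqP uv; move: (ori _ _ auw); rewrite uv awv.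
  - by rewrite /dwalk /= andbT => /andP[aut /eqP tv]; move: nuv; rewrite -tv aut.
apply: (hC u v) => //; right; exists [:: w; u]; split; last by rewrite !inE eqxx orbT.
split; first by rewrite /dwalk /= avw awu eqxx.
case=> [|t [|t' q]] //=.
- by rewrite /dwalk /= => /eqP uv; move: (ori _ _ avw); rewrite uv awu.
- by rewrite /dwalk /= andbT => /andP[aut /eqP tv]; move: nvu; rewrite -tv aut.
Qed.

Theorem proposition5 (T : finType) (a : rel T) :
  tournament a -> strong a -> 1 < #|T| ->
  hull_number_is (I_P3 a) 2 /\ hull_number_is (I_g a) 2.
Proof.
move=> tn st hT.
have [x _] : exists x : T, true by case/card_gt0P: (ltnW hT) => x _; exists x.
have [y yx] := other hT x.
have [p [q pq]] : exists p q, a p q.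
  case: tn => _ [_ tot]; case/orP: (tot _ _ yx) => h; [exists y, x | exists x, y]; done.
have [y' [z [h1 h2 h3]]] : exists y z, [/\ a p y, a y z & a z p].
  case/connectP: (st q p) => s ps lp; exact: (@tri T a p tn s q ps pq (esym lp)).
have [u [v [auv Hfull]]] := @iter_full T a #|T| tn st _ _ _ h1 h2 h3 (leq_subr _ _).
have card2 : #|[set u; v]| = 2.
  rewrite cards2; case: tn => irr _; suff -> : u != v by [].
  by apply: contraTneq auv => ->; rewrite (negbTE (irr v)).
have hP3 : hull_set (I_P3 a) [set u; v].
  move=> w C /cvxbP cC sC; have := H_min cC sC; rewrite Hfull => /subsetP; apply.
  by rewrite inE.
split; split.
- by exists [set u; v].
- exact: lower (P3_self tn) hT.
- exists [set u; v]; split=> // w C cC sC; exact: hP3 w C (g_P3 tn cC) sC.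
- exact: lower (@g_self T a) hT.
Qed.
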